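(* Let $C_n=\frac{1}{n+1}\binom{2n}{n}$ be the Catalan numbers. Then for every even integer $n\ge2$, $$C_n=\frac{1}{4n}\sum_{h=0}^{n-2}\binom{n}{h}(-1)^h4^{n-h}C_{h+1},$$ and for every odd integer $n\ge1$, $$C_{n+1}=\frac12\sum_{h=0}^{n-1}\binom{n}{h}(-1)^h4^{n-h}C_{h+1}.$$ *)

(* Defs.v *)
From mathcomp Require Import all_boot all_order all_algebra.
Set Implicit Arguments. Unset Strict Implicit. Unset Printing Implicit Defensive.
Import Order.TTheory GRing.Theory Num.Theory.
Local Open Scope ring_scope.

Definition catalan (n : nat) : rat := ('C(n.*2, n))%:R / (n.+1)%:R.

(* Main.v *)
Require Import Defs.
From mathcomp Require Import all_boot all_order all_algebra.
From mathcomp Require Import zify ring lra.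
Import Order.TTheory GRing.Theory Num.Theory.
Local Open Scope ring_scope.
Lemma bin_nat m : ('C((m.+1).*2, m.+1) * m.+1 = 2 * (m.*2.+1) * 'C(m.*2, m))%N.
Proof.
have h1 := mul_bin_diag (m.+1).*2 m.
have h2 := mul_bin_down (m.*2.+1) m.
rewrite doubleS /= in h1.
have e : (m.*2.+1 - m = m.+1)%N by rewrite -addnn; lia.
rewrite e /= in h2.
rewrite doubleS.
have : ('C(m.*2.+2, m.+1) * m.+1 * m.+1 = 2 * m.*2.+1 * 'C(m.*2, m) * m.+1)%N.
  rewrite [X in (X * _)%N]mulnC -h1 -mulnA [X in (_ * X)%N]mulnC -h2 -addnn; lia.
move/eqP; rewrite eqn_pmul2r //; move/eqP=> ->. by [].
Qed.

Lemma cat_rec m : (m.+2)%:R * catalan m.+1 = (4 * m%:R + 2) * catalan m.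
Proof.
rewrite /catalan.
have h := bin_nat m.
have hm : (m.+1)%:R != 0 :> rat by rewrite pnatr_eq0.
have hm2 : (m.+2)%:R != 0 :> rat by rewrite pnatr_eq0.
rewrite mulrC -mulrA mulVf // mulr1.
apply: (mulIf hm).
have -> : ('C((m.+1).*2, m.+1))%:R * (m.+1)%:R = 2 * (m.*2.+1)%:R * ('C(m.*2, m))%:R :> rat.
  by rewrite -natrM h !natrM.
rewrite -!mulrA mulVf // mulr1.
have -> : ((m.*2).+1)%:R = 2 * m%:R + 1 :> rat by rewrite -(addn1 m.*2) natrD -mul2n natrM.
ring.
Qed.

Definition T (f : nat -> rat) n :=
  \sum_(h < n.+1) ('C(n, h))%:R * (-1) ^+ h * 4 ^+ (n - h) * f h.

Lemma T_lin a b u v n :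
  T (fun k => a * u k + b * v k) n = a * T u n + b * T v n.
Proof.
rewrite /T !mulr_sumr -big_split /=; apply: eq_bigr => i _; ring.
Qed.

Lemma T_lin2 u a v n :
  T (fun k => u k + a * v k) n = T u n + a * T v n.
Proof.
rewrite /T !mulr_sumr -big_split /=; apply: eq_bigr => i _; ring.
Qed.

Lemma T_lin0 a u n : T (fun k => a * u k) n = a * T u n.
Proof.
rewrite /T !mulr_sumr; apply: eq_bigr => i _; ring.
Qed.

Lemma T_ext n u v : (forall k, u k = v k) -> T u n = T v n.
Proof. by move=> e; rewrite /T; apply: eq_bigr => i _; rewrite e. Qed.

Lemma T_shift f n : T (fun k => f k.+1) n = 4 * T f n - T f n.+1.
Proof.
have e1 : T f n = \sum_(h < n.+2) ('C(n, h))%:R * (-1) ^+ h * 4 ^+ (n - h) * f h.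
  by rewrite /T [in RHS]big_ord_recr /= bin_small // !mul0r addr0.
rewrite e1 /T mulr_sumr !(big_ord_recl n.+1) /=.
rewrite bin0 !subn0 expr0 !mulr1 !mul1r.
apply/eqP; rewrite -subr_eq0; apply/eqP.
rewrite (_ : forall a b c d e : rat, a - (4 * b + c - (d + e)) = (a - c + e) + (d - 4 * b)); last by move=> *; ring.
rewrite exprS mulrA subrr addr0. rewrite -sumrN -!big_split big1 // => i _.
rewrite /bump /= add1n binS natrD subSS exprS.
case: (ltnP i n) => hi.
  have -> : (n - i = (n - i.+1).+1)%N by lia.
  rewrite exprS; ring.
have -> : i = n :> nat by have := ltn_ord i; lia.
rewrite (bin_small (ltnSn n)); ring.
Qed.

Lemma T_mul f n : T (fun k => k%:R * f k) n.+1 = - n.+1%:R * T (fun k => f k.+1) n.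
Proof.
rewrite /T big_ord_recl /= mul0r mulr0 add0r mulr_sumr; apply: eq_bigr => i _.
rewrite /bump /= add1n subSS exprS.
have h := mul_bin_diag n.+1 i.
have : ('C(n.+1, i.+1))%:R * (i.+1)%:R = (n.+1)%:R * ('C(n, i))%:R :> rat.
  by rewrite -!natrM mulnC -h.
move=> hh.
transitivity (- (('C(n.+1, i.+1))%:R * (i.+1)%:R) * (-1) ^+ i * 4 ^+ (n - i) * f i.+1); first by ring.
rewrite hh; ring.
Qed.

Definition fc k := catalan k.+1.

Lemma fc_rec k : k%:R * fc k.+1 + 3 * fc k.+1 = 4 * (k%:R * fc k) + 6 * fc k.
Proof.
have := cat_rec k.+1; rewrite /fc => h.
have -> : k%:R * catalan k.+2 + 3 * catalan k.+2 = (k.+3)%:R * catalan k.+2.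
  rewrite -(addn3 k) natrD; ring.
rewrite h -(addn1 k) natrD; ring.
Qed.

Lemma key n : (n.+3)%:R * T fc n.+1 = (4 * n%:R + 6) * T fc n.
Proof.
case: n => [|m].
  rewrite /T !big_ord_recr !big_ord0 /= /fc.
  have := cat_rec 1%N.
  rewrite /= bin0 bin1 binn !subnn !subn0 /= !expr0 !expr1.
  move=> h; lra.
have E := @T_ext m.+1 _ _ fc_rec.
have L1 := T_lin2 (fun k => k%:R * fc k.+1) 3 (fun k => fc k.+1) m.+1.
have L2 := T_lin2 (fun k => 4 * (k%:R * fc k)) 6 fc m.+1.
have L3 := T_lin0 4 (fun k => k%:R * fc k) m.+1.
have M1 := T_mul (fun k => fc k.+1) m.
have M2 := T_mul fc m.
have S1 := T_shift (fun k => fc k.+1) m.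
have S2 := T_shift fc m.
have S3 := T_shift fc m.+1.
simpl in *.
rewrite L1 L2 L3 M1 M2 S1 S2 S3 in E.
clear L1 L2 L3 M1 M2 S1 S2 S3.
have hx : (m.+4)%:R = (m.+1)%:R + 3 :> rat by rewrite -addn3 natrD.
rewrite hx.
move: E; set x := (m.+1)%:R; set a := T fc m; set b := T fc m.+1; set c := T fc m.+2.
move=> E; apply/eqP; rewrite -subr_eq0; apply/eqP.
move: E; move/eqP; rewrite -subr_eq0; move/eqP => E.
rewrite -oppr0 -E; ring.
Qed.

Lemma Tcat n : T fc n = catalan n.+1.
Proof.
elim: n => [|n IH].
  by rewrite /T big_ord_recr big_ord0 /= add0r bin0 expr0 subnn expr0 !mul1r.
have h := key n; rewrite IH in h.
have c := cat_rec n.+1.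
have hn : (n.+3)%:R != 0 :> rat by rewrite pnatr_eq0.
apply: (mulfI hn).
rewrite h -/(fc n.+1) c. rewrite -(addn1 n) natrD; ring.
Qed.

Theorem mainTheorem12 :
  (forall n : nat, (2 <= n)%N -> ~~ odd n ->
     catalan n = (4 * n%:R)^-1 *
       \sum_(0 <= h < n.-1) ('C(n, h))%:R * (-1) ^+ h * 4 ^+ (n - h) * catalan h.+1)
  /\
  (forall n : nat, (1 <= n)%N -> odd n ->
     catalan n.+1 = 2^-1 *
       \sum_(0 <= h < n) ('C(n, h))%:R * (-1) ^+ h * 4 ^+ (n - h) * catalan h.+1).
Proof.
split.
  case=> [|[|k]] // _ hev /=.
  have := Tcat k.+2.
  rewrite /T big_ord_recr /= big_ord_recr /= big_mkord => e.
  have ok : odd k = false by move: hev; rewrite /= !negbK => /negbTE.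
  have hs : (-1) ^+ k.+1 = -1 :> rat by rewrite -signr_odd /= ok.
  have hs2 : (-1) ^+ k.+2 = 1 :> rat by rewrite -signr_odd /= ok.
  rewrite binn binSn subnn hs hs2 (_ : (k.+2 - k.+1 = 1)%N) in e; last by lia.
  rewrite /fc in e.
  have hn : (4 * (k.+2)%:R) != 0 :> rat by rewrite mulf_neq0 // pnatr_eq0.
  set S := \sum_(i < k.+1) _ in e *.
  have -> : S = 4 * (k.+2)%:R * catalan k.+2.
    move: e; rewrite expr0 expr1 => e.
    apply/eqP; rewrite -subr_eq0; apply/eqP.
    move: e; move/eqP; rewrite -subr_eq0; move/eqP => e.
    rewrite -e; ring.
  by rewrite mulKf.
move=> n _ hodd.
have := Tcat n.
rewrite /T big_ord_recr /= big_mkord binn subnn expr0 -signr_odd hodd /fc => e.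
set S := \sum_(i < n) _ in e *.
have -> : S = 2 * catalan n.+1.
  apply/eqP; rewrite -subr_eq0; apply/eqP.
  move: e; move/eqP; rewrite -subr_eq0; move/eqP => e.
  rewrite -e; ring.
by rewrite mulKf.
Qed.
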